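(* Let $G$ be the automorphism group of $(\mathbb{Q},<)$ and let $f \in G$. Then there do NOT exist $g, g_1, g_2 \in G$ such that $g$ is a restriction of $f$, $g_1$ is a bump which is an orbital of $g$, $g = g_1 g_2$, and $g$ is conjugate in $G$ to $g_2$, if and only if $f$ has only finitely many non-trivial orbitals.
   Context: For $f \in G$, an orbital of $f$ is an equivalence class of $\mathbb{Q}$ under $a \sim b$ iff there are integers $m,n$ with $f^m a \le b \le f^n a$; it is non-trivial if it has more than one point. The support of an element of $G$ is the set of points it moves. A bump is a non-identity element of $G$ with exactly one non-trivial orbital. An element $g$ is a restriction of $f$ if the support of $g$ is contained in that of $f$ and $g$ agrees with $f$ on the support of $g$. An element $g_1$ is an orbital of $g$ if $g_1$ is a bump whose support is contained in that of $g$ and $g_1$ agrees with $g$ on its support. *)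

(* Defs.v *)
From Stdlib Require Import ClassicalEpsilon.
From mathcomp Require Import all_boot all_order all_algebra.
From mathcomp Require Import boolp classical_sets cardinality.

Set Implicit Arguments.
Unset Strict Implicit.
Unset Printing Implicit Defensive.
Import Order.TTheory GRing.Theory Num.Theory.
Local Open Scope ring_scope.
Local Open Scope classical_set_scope.

Definition inG (f : rat -> rat) : Prop :=
  (forall x y : rat, x < y -> f x < f y) /\ (forall y : rat, exists x, f x = y).

(* The inverse of f (meaningful when f is a bijection). *)
Definition finv (f : rat -> rat) (y : rat) : rat :=
  epsilon (inhabits 0) (fun x => f x = y).

Definition powz (f : rat -> rat) (m : int) : rat -> rat :=
  match m with
  | Posz n => iter n f
  | Negz n => iter n.+1 (finv f)
  end.

Definition orb_rel (f : rat -> rat) (a b : rat) : Prop :=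
  exists m n : int, powz f m a <= b /\ b <= powz f n a.

Definition orbital (f : rat -> rat) (a : rat) : set rat := [set b | orb_rel f a b].

Definition nontrivial (O : set rat) : Prop := exists b c, O b /\ O c /\ b <> c.

Definition nontrivial_orbitals (f : rat -> rat) : set (set rat) :=
  [set O | exists a, O = orbital f a /\ nontrivial O].

Definition support (f : rat -> rat) : set rat := [set x | f x <> x].

Definition is_bump (g : rat -> rat) : Prop :=
  inG g /\ (exists x, g x <> x) /\
  exists O, nontrivial_orbitals g O /\ forall O', nontrivial_orbitals g O' -> O' = O.

Definition restriction (g f : rat -> rat) : Prop :=
  support g `<=` support f /\ forall x, support g x -> g x = f x.

Definition orbital_of (g1 g : rat -> rat) : Prop :=
  is_bump g1 /\ support g1 `<=` support g /\ forall x, support g1 x -> g1 x = g x.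

Definition conjugate_in_G (g g2 : rat -> rat) : Prop :=
  exists h, inG h /\ g \o h = h \o g2.

(* Main.v *)
Require Import Defs.
From Stdlib Require Import ClassicalEpsilon.
From mathcomp Require Import all_boot all_order all_algebra.
From mathcomp Require Import finmap boolp classical_sets functions cardinality.
From mathcomp Require Import ring lra zify.
From Stdlib Require Import Lia.
Require Import Defs.
Set Implicit Arguments.
Unset Strict Implicit.
Unset Printing Implicit Defensive.
Import Order.TTheory GRing.Theory Num.Theory.
Local Open Scope ring_scope.
Local Open Scope classical_set_scope.
Section P1.
Variable f : rat -> rat.
Hypothesis hf : inG f.

Lemma inG_lt x y : (f x < f y) = (x < y).
Proof. by apply: leW_mono; apply: le_mono; case: hf. Qed.
Lemma inG_le x y : (f x <= f y) = (x <= y).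
Proof. by apply: le_mono; case: hf. Qed.
Lemma inG_inj : injective f.
Proof. move=> x y e; apply/eqP; by rewrite eq_le -(inG_le x y) -(inG_le y x) e lexx. Qed.
Lemma finvK y : f (finv f y) = y.
Proof. rewrite /finv; apply: (epsilon_spec (inhabits 0) (fun x => f x = y)). by case: hf => _ /(_ y). Qed.
Lemma finvK' x : finv f (f x) = x.
Proof. by apply: inG_inj; rewrite finvK. Qed.
Lemma inG_finv : inG (finv f).
Proof.
split; last by move=> y; exists (f y); rewrite finvK'.
by move=> x y xy; rewrite -(inG_lt (finv f x)) !finvK.
Qed.
End P1.

Lemma inG_comp f g : inG f -> inG g -> inG (f \o g).
Proof.
move=> hf hg; split; first by move=> x y h /=; rewrite inG_lt // inG_lt.
move=> y; exists (finv g (finv f y)) => /=; by rewrite !finvK.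
Qed.

Lemma inG_id : inG id.
Proof. by split=> // y; exists y. Qed.

Lemma inG_iter f n : inG f -> inG (iter n f).
Proof.
move=> hf; elim: n => [|n IH] /=; first exact: inG_id.
exact: (inG_comp hf IH).
Qed.

Section Powz.
Variable f : rat -> rat.
Hypothesis hf : inG f.

Lemma inG_powz m : inG (powz f m).
Proof. case: m => n /=; apply: inG_iter => //; exact: inG_finv. Qed.

Lemma powz0 x : powz f 0 x = x. Proof. by []. Qed.
Lemma powz1 x : powz f 1 x = f x. Proof. by []. Qed.
Lemma powzN1 x : powz f (-1) x = finv f x. Proof. by []. Qed.

Lemma powzS m x : powz f (m + 1) x = f (powz f m x).
Proof.
case: m => [n|n].
  by have -> : Posz n + 1 = Posz n.+1 by lia.
case: n => [|n].
  by have -> : Negz 0 + 1 = 0 by []; rewrite /= finvK.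
have -> : Negz n.+1 + 1 = Negz n by rewrite !NegzE; lia.
by rewrite /= finvK.
Qed.

Lemma powzP m x : powz f (m - 1) x = finv f (powz f m x).
Proof. by rewrite -{2}(subrK 1 m) powzS finvK'. Qed.

Lemma powzD m n x : powz f (m + n) x = powz f m (powz f n x).
Proof.
elim/int_rect: m x => [|k IH|k IH] x; first by rewrite add0r.
  have -> : (k.+1 : int) + n = ((k : int) + n) + 1 by lia.
  have -> : (k.+1 : int) = (k : int) + 1 by lia.
  by rewrite !powzS IH.
have -> : - (k.+1 : int) + n = (- (k : int) + n) - 1 by lia.
have -> : - (k.+1 : int) = - (k : int) - 1 by lia.
by rewrite !powzP IH.
Qed.

Lemma powzK m x : powz f (- m) (powz f m x) = x.
Proof. by rewrite -powzD addNr. Qed.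
Lemma powzK' m x : powz f m (powz f (- m) x) = x.
Proof. by rewrite -powzD addrN. Qed.

Lemma powz_fix m x : f x = x -> powz f m x = x.
Proof.
move=> fx; elim/int_rect: m => [|k IH|k IH] //.
  have -> : (k.+1 : int) = (k : int) + 1 by lia.
  by rewrite powzS IH.
have -> : - (k.+1 : int) = - (k : int) - 1 by lia.
by rewrite powzP IH -{1}fx finvK'.
Qed.

Lemma powz_lt m x y : (powz f m x < powz f m y) = (x < y).
Proof. apply: inG_lt; exact: inG_powz. Qed.
Lemma powz_le m x y : (powz f m x <= powz f m y) = (x <= y).
Proof. apply: inG_le; exact: inG_powz. Qed.

Lemma orb_refl a : orbital f a a.
Proof. by exists 0, 0. Qed.

Lemma orb_powz a k : orbital f a (powz f k a).
Proof. by exists k, k. Qed.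

Lemma orb_sym a b : orbital f a b -> orbital f b a.
Proof.
case=> m [n [h1 h2]]; exists (- n), (- m); split.
  by rewrite -(powz_le n) powzK'.
by rewrite -(powz_le m) powzK'.
Qed.

Lemma orb_trans a b c : orbital f a b -> orbital f b c -> orbital f a c.
Proof.
case=> m [n [h1 h2]] [m' [n' [h3 h4]]]; exists (m' + m), (n' + n); split.
  by rewrite powzD (le_trans _ h3) // powz_le.
by rewrite powzD (le_trans h4) // powz_le.
Qed.

Lemma orb_eq a b : orbital f a b -> orbital f a = orbital f b.
Proof.
move=> h; apply/seteqP; split=> x hx.
  exact: orb_trans (orb_sym h) hx.
exact: orb_trans h hx.
Qed.

Lemma orb_conv a x y z : orbital f a x -> orbital f a y -> x <= z -> z <= y ->
  orbital f a z.
Proof.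
case=> m [_ [h1 _]] [_ [n [_ h2]]] h3 h4; exists m, n; split.
  exact: le_trans h1 h3.
exact: le_trans h4 h2.
Qed.

Lemma orb_powz_iff a k x : orbital f a (powz f k x) <-> orbital f a x.
Proof.
split=> h.
  apply: orb_trans h _; apply: orb_sym; exists k, k; by rewrite lexx.
by apply: orb_trans h _; exists k, k; rewrite lexx.
Qed.

Lemma orb_f_iff a x : orbital f a (f x) <-> orbital f a x.
Proof. by rewrite -powz1 orb_powz_iff. Qed.

Lemma orb_fix a : f a = a -> orbital f a = [set a].
Proof.
move=> fa; apply/seteqP; split=> x.
  case=> m [n]; rewrite !powz_fix // => -[h1 h2] /=; apply/eqP; rewrite eq_le h1 h2.
  done.
by move=> /= ->; exact: orb_refl.
Qed.

Lemma orb_disj a b x : orbital f a x -> orbital f b x -> orbital f a = orbital f b.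
Proof. move=> h1 h2; rewrite (orb_eq h1) (orb_eq h2) //. Qed.

Definition below (O P : set rat) := forall x y, O x -> P y -> x < y.

Lemma orb_total a b : orbital f a <> orbital f b ->
  below (orbital f a) (orbital f b) \/ below (orbital f b) (orbital f a).
Proof.
move=> ne.
have key : forall a b, orbital f a <> orbital f b -> a < b -> below (orbital f a) (orbital f b).
  clear a b ne; move=> a b ne ab x y hx hy; rewrite ltNge; apply/negP => yx.
  case: (leP b x) => bx.
    apply: ne; apply: (@orb_disj _ _ b) => //; last exact: orb_refl.
    apply: (orb_conv (orb_refl _) hx) => //; exact: ltW.
  apply: ne; apply: (@orb_disj _ _ x) => //.
  apply: (orb_conv hy (orb_refl _)) => //; exact: ltW.
case: (ltgtP a b) => ab; first by left; exact: key.
  by right; apply: key => // e; apply: ne.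
by case: ne; rewrite ab.
Qed.

Lemma conv_trich (O : set rat) (conv : forall x y z, O x -> O y -> x <= z -> z <= y -> O z) x :
  O x \/ (forall y, O y -> x < y) \/ (forall y, O y -> y < x).
Proof.
case: (pselect (O x)) => Ox; first by left.
case: (pselect (forall y, O y -> x < y)) => h1; first by right; left.
right; right => y Oy; rewrite ltNge; apply/negP => xy.
apply: h1 => z Oz; rewrite ltNge; apply/negP => zx.
by apply: Ox; apply: (conv z y).
Qed.

End Powz.

Section Restr.
Variables f g : rat -> rat.
Hypotheses (hf : inG f) (hg : inG g) (hr : restriction g f).

Lemma restr_step x : support g x ->
  [/\ g x = f x, support g (g x), finv g x = finv f x & support g (finv g x)].
Proof.
move=> sx; case: hr => hs ha.
have s1 : support g (g x) by move=> /= e; apply: sx; exact: (inG_inj hg e).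
have s2 : support g (finv g x).
  move=> /= e; apply: sx; have e' : x = finv g x by rewrite -{1}(finvK hg x) e.
  by rewrite {1}e' finvK.
split=> //; first exact: ha.
apply: (inG_inj hf); rewrite finvK // -(ha _ s2) finvK //.
Qed.

Lemma restr_powz m a : support g a -> powz g m a = powz f m a /\ support g (powz g m a).
Proof.
elim/int_rect: m a => [|k IH|k IH] a sa; first by [].
  have -> : (k.+1 : int) = (k : int) + 1 by lia.
  have [e1 s1] := IH a sa; rewrite !powzS //.
  by have [e2 s2 _ _] := restr_step s1; split=> //; rewrite e2 e1.
have -> : - (k.+1 : int) = - (k : int) - 1 by lia.
have [e1 s1] := IH a sa; rewrite !powzP //.
by have [_ _ e2 s2] := restr_step s1; split=> //; rewrite e2 e1.
Qed.

Lemma restr_orb a : support g a -> orbital g a = orbital f a.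
Proof.
move=> sa; have E k := proj1 (restr_powz k sa).
by apply/seteqP; split=> x [m [n h]]; exists m, n; rewrite ?E // -!E.
Qed.
End Restr.

Lemma nontriv_supp g a : inG g -> nontrivial (orbital g a) -> support g a.
Proof.
move=> hg [b [c [hb [hc ne]]]] e; apply: ne; move: hb hc; rewrite orb_fix //.
by move=> /= -> ->.
Qed.

Lemma orb_in_supp g a : inG g -> support g a -> orbital g a `<=` support g.
Proof.
move=> hg sa y [m [n [h1 h2]]] /= gy; apply: sa.
have e : forall k, powz g k y = y by move=> k; exact: powz_fix.
have h1' : a <= y by rewrite -(powz_le hg m) e.
have h2' : y <= a by rewrite -(powz_le hg n) e.
have -> : a = y by apply/eqP; rewrite eq_le h1' h2'.
exact: gy.
Qed.

Lemma supp_nontriv g a : inG g -> support g a -> nontrivial (orbital g a).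
Proof.
move=> hg sa; exists a, (g a); split; first exact: orb_refl.
split; last by move=> e; apply: sa.
by rewrite -powz1; apply: orb_powz.
Qed.

Lemma NO_char g O : inG g -> nontrivial_orbitals g O <-> exists a, support g a /\ O = orbital g a.
Proof.
move=> hg; split.
  by case=> a [-> nt]; exists a; split=> //; exact: nontriv_supp nt.
by case=> a [sa ->]; exists a; split=> //; exact: supp_nontriv.
Qed.

Lemma NO_restr f g : inG f -> inG g -> restriction g f ->
  nontrivial_orbitals g `<=` nontrivial_orbitals f.
Proof.
move=> hf hg hr O /(NO_char _ hg) [a [sa ->]]; apply/(NO_char _ hf).
exists a; split; first by case: hr => hs _; exact: hs.
exact: restr_orb.
Qed.

Section Conj.
Variables g g2 h : rat -> rat.
Hypotheses (hg : inG g) (hg2 : inG g2) (hh : inG h) (hc : g \o h = h \o g2).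

Lemma conj_pt x : g (h x) = h (g2 x).
Proof. by have := congr1 (fun F => F x) hc. Qed.

Lemma conj_powz m x : powz g m (h x) = h (powz g2 m x).
Proof.
elim/int_rect: m x => [|k IH|k IH] x; first by [].
  have -> : (k.+1 : int) = (k : int) + 1 by lia.
  by rewrite !powzS // IH conj_pt.
have -> : - (k.+1 : int) = - (k : int) - 1 by lia.
rewrite !powzP // IH; apply: (inG_inj hg); rewrite finvK // conj_pt finvK //.
Qed.

Lemma conj_orb a : orbital g (h a) = h @` orbital g2 a.
Proof.
apply/seteqP; split=> y.
  case=> m [n]; rewrite !conj_powz => -[h1 h2].
  exists (finv h y); last by rewrite finvK.
  by exists m, n; split; rewrite -(inG_le hh) finvK.
case=> x [m [n [h1 h2]]] <-; exists m, n; rewrite !conj_powz !inG_le //.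
Qed.

Lemma conj_supp a : support g (h a) <-> support g2 a.
Proof.
rewrite /support /= conj_pt; split=> ne e; apply: ne; first by rewrite e.
exact: (inG_inj hh).
Qed.

Lemma conj_NO : nontrivial_orbitals g = (fun O => h @` O) @` nontrivial_orbitals g2.
Proof.
apply/seteqP; split=> O.
  move=> /(NO_char _ hg) [a [sa ->]].
  exists (orbital g2 (finv h a)).
    apply/(NO_char _ hg2); exists (finv h a); split=> //.
    by apply/conj_supp; rewrite finvK.
  by rewrite -conj_orb finvK.
case=> P /(NO_char _ hg2) [a [sa ->]] <-; apply/(NO_char _ hg).
exists (h a); split; last by rewrite conj_orb.
exact/conj_supp.
Qed.
End Conj.

Lemma image_inj (h : rat -> rat) : injective h -> injective (fun O : set rat => h @` O).
Proof.
move=> hi A B e; apply/seteqP; split=> x hx.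
  have : (h @` B) (h x) by rewrite -e; exists x.
  by case=> y hy /hi <-.
have : (h @` A) (h x) by rewrite e; exists x.
by case=> y hy /hi <-.
Qed.

Lemma part1 f g g1 g2 : inG f -> inG g -> inG g1 -> inG g2 -> restriction g f ->
  is_bump g1 -> orbital_of g1 g -> g = (fun x => g1 (g2 x)) -> conjugate_in_G g g2 ->
  ~ finite_set (nontrivial_orbitals f).
Proof.
move=> hf hg hg1 hg2 hr [_ [_ [O1 [NO1 uniq1]]]] [_ [s1 a1]] eg [h [hh hc]] fin.
have hr1 : restriction g1 g by split.
have E : forall x, g x = g1 (g2 x) by move=> x; rewrite {1}eg.
have g2a : forall x, support g1 x -> g2 x = x.
  by move=> x sx; apply: (inG_inj hg1); rewrite -E a1.
have g2b : forall x, ~ support g1 x -> g2 x = g x.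
  move=> x nsx; case: (pselect (support g1 (g2 x))) => s2x.
    exfalso; have e : g x = g (g2 x) by rewrite E a1.
    have ex : x = g2 x := inG_inj hg e.
    by apply: nsx; rewrite ex.
  by rewrite E (contrapT s2x).
have s2 : forall x, support g2 x -> ~ support g1 x.
  by move=> x sx s1x; apply: sx; exact: g2a.
have hr2 : restriction g2 g.
  split=> x sx; last by rewrite g2b //; exact: s2.
  by rewrite /support /= -g2b //; exact: s2.
have finG : finite_set (nontrivial_orbitals g).
  exact: sub_finite_set (NO_restr hf hg hr) fin.
have O1g : nontrivial_orbitals g O1.
  move: NO1 => /(NO_char _ hg1) [c [sc ->]]; apply/(NO_char _ hg).
  exists c; split; first by case: hr1 => hs _; exact: hs.
  exact: restr_orb.
have O1sub : O1 `<=` support g1.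
  by move: NO1 => /(NO_char _ hg1) [c [sc ->]]; exact: orb_in_supp.
have eNO2 : nontrivial_orbitals g2 = nontrivial_orbitals g `\ O1.
  apply/seteqP; split=> O.
    move=> /(NO_char _ hg2) [a [sa ->]]; split.
      apply/(NO_char _ hg); exists a; split; first by case: hr2 => hs _; exact: hs.
      exact: restr_orb.
    move=> /= e; rewrite (restr_orb hg hg2 hr2 sa) in e.
    by apply: (s2 _ sa); apply: O1sub; rewrite -e; exact: orb_refl.
  case=> /(NO_char _ hg) [a [sa ->]] /= ne.
  case: (pselect (support g1 a)) => s1a.
    exfalso; apply: ne; rewrite -(restr_orb hg hg1 hr1 s1a); apply: uniq1.
    by apply/(NO_char _ hg1); exists a.
  have sa2 : support g2 a by rewrite /support /= g2b.
  apply/(NO_char _ hg2); exists a; split => //.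
  by rewrite (restr_orb hg hg2 hr2 sa2).
have eC := conj_NO hg hg2 hh hc.
have finG2 : finite_set (nontrivial_orbitals g2) by rewrite eNO2; exact: finite_setD.
have c1 := congr1 (fun A => #|` fset_set A|%fset) eC.
rewrite /= fset_set_image // card_in_imfset /= in c1; last first.
  by move=> A B _ _; apply: image_inj; exact: inG_inj.
rewrite eNO2 fset_setD1 // in c1.
have := cardfsD1 O1 (fset_set (nontrivial_orbitals g)).
rewrite in_fset_set // mem_set //= c1.
lia.
Qed.

Definition iso (A B : set rat) (phi : rat -> rat) :=
  [/\ forall x y, A x -> A y -> x < y -> phi x < phi y,
      forall x, A x -> B (phi x) &
      forall y, B y -> exists x, A x /\ phi x = y].

Definition convex (A : set rat) := forall x y z, A x -> A y -> x <= z -> z <= y -> A z.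
Definition hasmin (A : set rat) := exists m, A m /\ forall x, A x -> m <= x.
Definition hasmax (A : set rat) := exists m, A m /\ forall x, A x -> x <= m.

Lemma iso_ext A B A' B' phi psi : iso A B phi -> (forall x, A x <-> A' x) ->
  (forall y, B y <-> B' y) -> (forall x, A x -> phi x = psi x) -> iso A' B' psi.
Proof.
move=> [h1 h2 h3] eA eB ep; split.
- move=> x y /eA ax /eA ay xy; rewrite -!ep //; exact: h1.
- by move=> x /eA ax; rewrite -ep //; apply/eB; exact: h2.
- move=> y /eB /h3 [x [ax <-]]; exists x; split; [exact/eA | by rewrite ep].
Qed.

Lemma iso_inG phi A B : inG phi -> (forall x, A x <-> B (phi x)) -> iso A B phi.
Proof.
move=> hp e; split.
- by move=> x y _ _; rewrite inG_lt.
- by move=> x /e.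
- by move=> y By; exists (finv phi y); rewrite finvK //; split => //; apply/e; rewrite finvK.
Qed.

Lemma iso_G phi : iso setT setT phi -> inG phi.
Proof.
case=> h1 _ h3; split; first by move=> x y; exact: h1.
by move=> y; have [x [_ e]] := h3 y I; exists x.
Qed.

Lemma iso_inj A B phi x y : iso A B phi -> A x -> A y -> phi x = phi y -> x = y.
Proof.
case=> h1 _ _ ax ay e; case: (ltgtP x y) => // xy.
  by have := h1 _ _ ax ay xy; rewrite e ltxx.
by have := h1 _ _ ay ax xy; rewrite e ltxx.
Qed.

Lemma iso_remove A B phi a b : iso A B phi -> A a -> phi a = b ->
  iso [set x | A x /\ x <> a] [set y | B y /\ y <> b] phi.
Proof.
move=> hi ha hb; have [h1 h2 h3] := hi; split.
- by move=> x y [ax _] [ay _]; exact: h1.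
- move=> x [ax xa]; split; first exact: h2.
  by move=> e; apply: xa; apply: (iso_inj hi) => //; rewrite e hb.
- move=> y [By yb]; have [x [ax e]] := h3 y By; exists x; split=> //; split=> //.
  by move=> xa; apply: yb; rewrite -e xa.
Qed.

Lemma glue (I : Type) (A B : set rat) (p q : rat -> I) (R : I -> I -> Prop)
  (phi : I -> rat -> rat) :
  (forall x y, A x -> A y -> x < y -> p x <> p y -> R (p x) (p y)) ->
  (forall u v, B u -> B v -> R (q u) (q v) -> u < v) ->
  (forall i, iso [set x | A x /\ p x = i] [set y | B y /\ q y = i] (phi i)) ->
  iso A B (fun x => phi (p x) x).
Proof.
move=> hR hB hi; split.
- move=> x y ax ay xy; case: (pselect (p x = p y)) => e.
    rewrite -e; have [h1 _ _] := hi (p x); apply: h1 => //; split=> //.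
  have [_ h2 _] := hi (p x); have [_ h2' _] := hi (p y).
  have [b1 q1] := h2 x (conj ax erefl); have [b2 q2] := h2' y (conj ay erefl).
  apply: hB => //; rewrite q1 q2; exact: hR.
- by move=> x ax; have [_ h2 _] := hi (p x); have [] := h2 x (conj ax erefl).
- move=> y By; have [_ _ h3] := hi (q y); have [x [[ax px] e]] := h3 y (conj By erefl).
  by exists x; split => //; rewrite px.
Qed.

Lemma inG_lin k m : 0 < k -> inG (fun x => k * x + m).
Proof.
move=> hk; split; first by move=> x y h; nra.
move=> y; exists ((y - m) / k); field; by rewrite gt_eqF.
Qed.

Definition aff (a b c d : rat) := fun x => (d - c) / (b - a) * x + (c - (d - c) / (b - a) * a).

Lemma aff_a a b c d : aff a b c d a = c.
Proof. rewrite /aff; ring. Qed.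
Lemma aff_b a b c d : a < b -> aff a b c d b = d.
Proof. move=> h; rewrite /aff; field; rewrite subr_eq0 gt_eqF //. Qed.
Lemma inG_aff a b c d : a < b -> c < d -> inG (aff a b c d).
Proof.
move=> h1 h2; apply: inG_lin; apply: divr_gt0; by rewrite subr_gt0.
Qed.

Lemma aff_iso_co a b c d : a < b -> c < d ->
  iso [set x | a <= x < b] [set y | c <= y < d] (aff a b c d).
Proof.
move=> h1 h2; have hg := inG_aff h1 h2; apply: iso_inG => // x /=.
by rewrite -(inG_le hg a x) -(inG_lt hg x b) aff_a aff_b.
Qed.

Lemma aff_iso_cc a b c d : a < b -> c < d ->
  iso [set x | a <= x <= b] [set y | c <= y <= d] (aff a b c d).
Proof.
move=> h1 h2; have hg := inG_aff h1 h2; apply: iso_inG => // x /=.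
by rewrite -(inG_le hg a x) -(inG_le hg x b) aff_a aff_b.
Qed.

Lemma seq_le (u : nat -> rat) : (forall n, u n < u n.+1) -> forall m n, (m <= n)%N -> u m <= u n.
Proof.
move=> hu m n mn; rewrite -(subnKC mn); elim: (n - m)%N => [|k IH]; first by rewrite addn0.
by rewrite addnS (le_trans IH) // ltW.
Qed.

Lemma seq_lt (u : nat -> rat) : (forall n, u n < u n.+1) -> forall m n, (m < n)%N -> u m < u n.
Proof. move=> hu m n mn; exact: lt_le_trans (hu m) (seq_le hu mn). Qed.

Lemma idx_ex (u : nat -> rat) x : (forall n, u n < u n.+1) -> u 0%N <= x ->
  (exists N, x < u N) -> exists n, u n <= x < u n.+1.
Proof.
move=> hu h0 hN; have [N xN minN] := find_ex_minn hN.
case: N xN minN => [|n] xN minN; first by move: xN; rewrite ltNge h0.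
exists n; rewrite xN andbT leNgt; apply/negP => /minN; by rewrite ltnn.
Qed.

Lemma idx_uniq (u : nat -> rat) x n m : (forall n, u n < u n.+1) ->
  u n <= x < u n.+1 -> u m <= x < u m.+1 -> n = m.
Proof.
move=> hu /andP[a1 a2] /andP[b1 b2]; case: (ltngtP n m) => // nm.
  by have := seq_le hu nm; rewrite leNgt (le_lt_trans b1 a2).
by have := seq_le hu nm; rewrite leNgt (le_lt_trans a1 b2).
Qed.

Definition enumq (n : nat) : rat := odflt 0 (choice.unpickle n).
Lemma enumq_pickle x : enumq (choice.pickle x) = x.
Proof. by rewrite /enumq choice.pickleK. Qed.

Definition nxtc (A : set rat) (x : rat) (n : nat) : rat :=
  epsilon (inhabits 0) (fun y => A y /\ x < y /\ (A (enumq n) -> enumq n < y)).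

Fixpoint seqc (A : set rat) (a : rat) (n : nat) : rat :=
  match n with 0%N => a | n'.+1 => nxtc A (seqc A a n') n' end.

Lemma nxtc_spec A x n : A x -> (forall x, A x -> exists y, A y /\ x < y) ->
  A (nxtc A x n) /\ x < nxtc A x n /\ (A (enumq n) -> enumq n < nxtc A x n).
Proof.
move=> ax nm; apply: (epsilon_spec (inhabits 0) (fun y => A y /\ x < y /\ (A (enumq n) -> enumq n < y))).
case: (pselect (A (enumq n))) => ae.
  case: (leP (enumq n) x) => ex.
    have [y [ay xy]] := nm x ax; exists y; split=> //; split=> // _; exact: le_lt_trans ex xy.
  have [y [ay xy]] := nm _ ae; exists y; split=> //; split=> //; exact: lt_trans ex xy.
have [y [ay xy]] := nm x ax; exists y; by split=> //; split.
Qed.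

Lemma cofinal A a : A a -> (forall x, A x -> exists y, A y /\ x < y) ->
  exists u : nat -> rat, [/\ u 0%N = a, forall n, A (u n), forall n, u n < u n.+1 &
    forall x, A x -> exists n, x < u n].
Proof.
move=> aa nm; have hA : forall n, A (seqc A a n).
  by elim=> [|n IH] //=; have [] := nxtc_spec n IH nm.
exists (seqc A a); split=> //.
  by move=> n /=; have [_ []] := nxtc_spec n (hA n) nm.
move=> x ax; exists (choice.pickle x).+1 => /=.
have [_ [_ h]] := nxtc_spec (choice.pickle x) (hA (choice.pickle x)) nm.
by move: h; rewrite enumq_pickle; apply.
Qed.

Lemma nomax A : ~ hasmax A -> forall x, A x -> exists y, A y /\ x < y.
Proof.
move=> nh x ax; apply: contrapT => ne; apply: nh; exists x; split=> // y ay.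
rewrite leNgt; apply/negP => xy; apply: ne; by exists y.
Qed.

Lemma half_iso A B a b : convex A -> convex B -> A a -> B b ->
  (forall x, A x -> a <= x) -> (forall y, B y -> b <= y) ->
  (exists x, A x /\ a < x) -> (exists y, B y /\ b < y) ->
  (hasmax A <-> hasmax B) -> exists phi, iso A B phi /\ phi a = b.
Proof.
move=> cA cB aa bb ma mb [x1 [ax1 ax1']] [y1 [by1 by1']] eM.
case: (pselect (hasmax A)) => hm.
  have [m [am mm]] := hm; have [m' [bm' mm']] := eM.1 hm.
  have am' : a < m by exact: lt_le_trans ax1' (mm _ ax1).
  have bm'' : b < m' by exact: lt_le_trans by1' (mm' _ by1).
  exists (aff a m b m'); split; last exact: aff_a.
  apply: (iso_ext (aff_iso_cc am' bm'')) => //.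
  - move=> x /=; split; first by move=> /andP[h1 h2]; exact: cA h1 h2.
    by move=> ax; rewrite ma //= mm.
  - move=> y /=; split; first by move=> /andP[h1 h2]; exact: cB h1 h2.
    by move=> ay; rewrite mb //= mm'.
have hm' : ~ hasmax B by move=> /eM.
have [u [u0 uA uinc ucof]] := cofinal aa (nomax hm).
have [v [v0 vB vinc vcof]] := cofinal bb (nomax hm').
pose p x := epsilon (inhabits 0%N) (fun n => u n <= x < u n.+1).
pose q y := epsilon (inhabits 0%N) (fun n => v n <= y < v n.+1).
have pP : forall x, A x -> u (p x) <= x < u (p x).+1.
  move=> x ax; apply: (epsilon_spec (inhabits 0%N) (fun n => u n <= x < u n.+1)).
  by apply: idx_ex => //; [rewrite u0 ma | exact: ucof].
have qP : forall y, B y -> v (q y) <= y < v (q y).+1.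
  move=> y ay; apply: (epsilon_spec (inhabits 0%N) (fun n => v n <= y < v n.+1)).
  by apply: idx_ex => //; [rewrite v0 mb | exact: vcof].
exists (fun x => aff (u (p x)) (u (p x).+1) (v (p x)) (v (p x).+1) x); split; last first.
  have h0 : u 0%N <= a < u 1%N by rewrite {1}u0 lexx /= -{1}u0; exact: uinc.
  have -> : p a = 0%N by apply: (idx_uniq uinc (pP a aa) h0).
  by rewrite -u0 aff_a.
apply: (glue (R := fun i j => (i < j)%N) (q := q) (p := p) (phi := fun n => aff (u n) (u n.+1) (v n) (v n.+1))).
- move=> x y ax ay xy ne; rewrite ltn_neqAle; apply/andP; split; first by apply/eqP.
  rewrite leqNgt; apply/negP => h.
  have h3 := seq_le uinc h; have /andP[_ h1] := pP y ay; have /andP[h2 _] := pP x ax.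
  have : y < x by apply: lt_le_trans h1 (le_trans h3 h2).
  by rewrite ltNge (ltW xy).
- move=> x y bx bY h; have /andP[_ h1] := qP x bx; have /andP[h2 _] := qP y bY.
  exact: lt_le_trans h1 (le_trans (seq_le vinc h) h2).
- move=> n; apply: (iso_ext (aff_iso_co (uinc n) (vinc n))).
  + move=> x /=; split.
      move=> hx; have ax : A x.
        by case/andP: hx => h1 h2; apply: (cA _ _ _ (uA n) (uA n.+1) h1 (ltW h2)).
      by split=> //; apply: (idx_uniq uinc (pP x ax)).
    by case=> ax <-; exact: pP.
  + move=> y /=; split.
      move=> hy; have By : B y.
        by case/andP: hy => h1 h2; apply: (cB _ _ _ (vB n) (vB n.+1) h1 (ltW h2)).
      by split=> //; apply: (idx_uniq vinc (qP y By)).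
    by case=> By <-; exact: qP.
  + by [].
Qed.

Definition negS (A : set rat) : set rat := [set x | A (- x)].

Lemma iso_neg A B phi : iso A B phi -> iso (negS A) (negS B) (fun x => - phi (- x)).
Proof.
case=> h1 h2 h3; split.
- move=> x y ax ay xy; rewrite ltrN2; apply: h1 => //; by rewrite ltrN2.
- by move=> x ax; rewrite /negS /= opprK; exact: h2.
- move=> y By; have [x [ax e]] := h3 _ By; exists (- x); rewrite /negS /= opprK e opprK.
  by split.
Qed.

Lemma conv_iso C D : convex C -> convex D ->
  (exists x y, C x /\ C y /\ x < y) -> (exists x y, D x /\ D y /\ x < y) ->
  (hasmin C <-> hasmin D) -> (hasmax C <-> hasmax D) -> exists phi, iso C D phi.
Proof.
move=> cC cD [c0 [c1 [hc0 [hc1 c01]]]] [d0 [d1 [hd0 [hd1 d01]]]] emin emax.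
pose c := (c0 + c1) / 2; pose d := (d0 + d1) / 2.
have cc0 : c0 < c by rewrite /c; lra.
have cc1 : c < c1 by rewrite /c; lra.
have dd0 : d0 < d by rewrite /d; lra.
have dd1 : d < d1 by rewrite /d; lra.
have hc : C c by apply: (cC c0 c1) => //; exact: ltW.
have hd : D d by apply: (cD d0 d1) => //; exact: ltW.
pose UC := [set x | C x /\ c <= x]; pose UD := [set x | D x /\ d <= x].
have cvU : forall (X : set rat) e, convex X -> convex [set x | X x /\ e <= x].
  move=> X e cX x y z [xa xb] [ya yb] h1 h2; split; first exact: cX h1 h2.
  exact: le_trans xb h1.
have maxU : forall (X : set rat) e e1, X e1 -> e < e1 -> (hasmax [set x | X x /\ e <= x] <-> hasmax X).
  move=> X e e1 xe1 ee1; split.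
    case=> m [[xm em] hm]; exists m; split => // x xx.
    case: (leP e x) => ex; first exact: hm.
    exact: ltW (lt_le_trans ex em).
  case=> m [xm hm]; exists m; split; last by move=> x [xx _]; exact: hm.
  by split=> //; apply: ltW (lt_le_trans ee1 (hm _ xe1)).
have [phiU [isoU eU]] : exists phi, iso UC UD phi /\ phi c = d.
  apply: half_iso.
  - exact: cvU.
  - exact: cvU.
  - by split.
  - by split.
  - by move=> x [].
  - by move=> x [].
  - by exists c1; split=> //; split=> //; exact: ltW.
  - by exists d1; split=> //; split=> //; exact: ltW.
  - by rewrite (maxU _ _ _ hc1 cc1) (maxU _ _ _ hd1 dd1).
pose LC := [set x | C (- x) /\ - c <= x]; pose LD := [set x | D (- x) /\ - d <= x].
have cvN : forall X : set rat, convex X -> convex (negS X).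
  move=> X cX x y z xx xy h1 h2; rewrite /negS /=; apply: (cX (- y) (- x)) => //;
  by rewrite lerN2.
have maxN : forall (X : set rat) e e1, X e1 -> e1 < e ->
    (hasmax [set x | X (- x) /\ - e <= x] <-> hasmin X).
  move=> X e e1 xe1 ee1; split.
    case=> m [[xm em] hm]; exists (- m); split => // x xx.
    case: (leP x e) => ex.
      by rewrite lerNl; apply: hm => /=; rewrite opprK; split=> //; rewrite lerN2.
    by lra.
  case=> m [xm hm]; exists (- m); split.
    rewrite /= opprK; split=> //; have := hm _ xe1; lra.
  by move=> x [xx _]; rewrite lerNr; exact: hm.
have [phiL [isoL eL]] : exists phi, iso LC LD phi /\ phi (- c) = - d.
  apply: half_iso.
  - exact: (cvU (negS C) (- c) (cvN _ cC)).
  - exact: (cvU (negS D) (- d) (cvN _ cD)).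
  - by split; rewrite ?opprK.
  - by split; rewrite ?opprK.
  - by move=> x [].
  - by move=> x [].
  - by exists (- c0); split; [split; rewrite ?opprK // lerN2 ltW | rewrite ltrN2].
  - by exists (- d0); split; [split; rewrite ?opprK // lerN2 ltW | rewrite ltrN2].
  - by rewrite (maxN _ _ _ hc0 cc0) (maxN _ _ _ hd0 dd0).
have isoL' := iso_neg isoL.
pose phi b := if b then (fun x => - phiL (- x)) else phiU.
exists (fun x => phi (x < c) x).
apply: (glue (R := fun i j => i = true /\ j = false) (q := fun y => y < d) (p := fun x => x < c) (phi := phi)).
- move=> x y _ _ xy /= ne; have xc : x < c.
    rewrite ltNge; apply/negP => cx; apply: ne.
    by rewrite ltNge cx ltNge (le_trans cx (ltW xy)).
  rewrite xc; split=> //; move: ne; rewrite xc; by case: (y < c).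
- move=> x y _ _ /= [h1 h2]; move/negbT: h2; rewrite -leNgt => h2; exact: lt_le_trans h1 h2.
- case.
  + have A1 : negS LC c by rewrite /negS /LC /= opprK; split.
    have B1 : - phiL (- c) = d by rewrite eL opprK.
    apply: (iso_ext (iso_remove isoL' A1 B1)).
    * move=> x; rewrite /negS /LC /=; split.
        case=> [[hx xc] ne]; rewrite opprK in hx; split => //; rewrite lerN2 in xc.
        by rewrite lt_neqAle; apply/andP; split => //; apply/eqP.
      case=> hx xc; split; first by rewrite opprK; split => //; rewrite lerN2 ltW.
      by move=> e; move: xc; rewrite e ltxx.
    * move=> x; rewrite /negS /LD /=; split.
        case=> [[hx xc] ne]; rewrite opprK in hx; split => //; rewrite lerN2 in xc.
        by rewrite lt_neqAle; apply/andP; split => //; apply/eqP.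
      case=> hx xc; split; first by rewrite opprK; split => //; rewrite lerN2 ltW.
      by move=> e; move: xc; rewrite e ltxx.
    * by [].
  + apply: (iso_ext isoU) => //.
    * by move=> x; split; [case=> hx xc; split=> //; apply/negbTE; rewrite -leNgt | case=> hx /negbT; rewrite -leNgt].
    * by move=> x; split; [case=> hx xc; split=> //; apply/negbTE; rewrite -leNgt | case=> hx /negbT; rewrite -leNgt].
Qed.

Section OrbConj.
Variable f : rat -> rat.
Hypothesis hf : inG f.

Lemma powz_step a k : a < f a -> powz f k a < powz f (k + 1) a.
Proof. by move=> h; rewrite powzD // powz1 powz_lt. Qed.

Lemma powz_mono a j k : a < f a -> j <= k -> powz f j a <= powz f k a.
Proof.
move=> h jk; have [n ->] : exists n : nat, k = j + n.
  by exists `|k - j|%N; lia.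
elim: n => [|n IH]; first by rewrite addr0.
apply: (le_trans IH); apply: ltW.
have -> : j + n.+1 = (j + n) + 1 by lia.
exact: powz_step.
Qed.

Definition Ak (a : rat) (k : int) := [set x | powz f k a <= x < powz f (k + 1) a].

Lemma Ak_ex a x : a < f a -> orbital f a x -> exists k, Ak a k x.
Proof.
move=> h [m [n [h1 h2]]].
pose u (N : nat) := powz f (m + N) a.
have uinc : forall N, u N < u N.+1.
  move=> N; rewrite /u; have -> : m + N.+1 = (m + N) + 1 by lia.
  exact: powz_step.
have [k hk] : exists N, u N <= x < u N.+1.
  apply: idx_ex => //; first by rewrite /u addr0.
  exists `|(n + 1 - m)%R|%N; rewrite /u (le_lt_trans h2) //.
  apply: (lt_le_trans (powz_step n h)); apply: powz_mono => //; lia.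
exists (m + k); move: hk; rewrite /u /Ak /=.
by have -> : m + k.+1 = (m + k) + 1 by lia.
Qed.

Lemma Ak_uniq a x j k : a < f a -> Ak a j x -> Ak a k x -> j = k.
Proof.
move=> h /andP[a1 a2] /andP[b1 b2].
case: (ltgtP j k) => // jk.
  have : powz f (j + 1) a <= powz f k a by apply: powz_mono => //; lia.
  by rewrite leNgt (le_lt_trans b1 a2).
have : powz f (k + 1) a <= powz f j a by apply: powz_mono => //; lia.
by rewrite leNgt (le_lt_trans a1 b2).
Qed.

Lemma Ak_orb a k : Ak a k `<=` orbital f a.
Proof. by move=> x /andP[h1 h2]; exists k, (k + 1); split => //; exact: ltW. Qed.

Lemma orb_conj_pos a b : a < f a -> b < f b ->
  exists phi, iso (orbital f a) (orbital f b) phi /\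
    forall x, orbital f a x -> phi (f x) = f (phi x).
Proof.
move=> ha hb.
pose psi := aff a (f a) b (f b).
have hpsi : inG psi by exact: inG_aff.
pose ph (k : int) := powz f k \o (psi \o powz f (- k)).
have hph : forall k, inG (ph k).
  by move=> k; apply: inG_comp; [exact: inG_powz | apply: inG_comp => //; exact: inG_powz].
have isok : forall k, iso (Ak a k) (Ak b k) (ph k).
  move=> k; apply: iso_inG => // x; rewrite /Ak /ph /=.
  set y := powz f (- k) x.
  have ex : x = powz f k y by rewrite /y powzK'.
  rewrite ex !powzD // !powz1 !powz_le // !powz_lt //.
  by rewrite -(inG_le hpsi a y) -(inG_lt hpsi y (f a)) /psi aff_a aff_b.
pose pA x := epsilon (inhabits (0 : int)) (fun k => Ak a k x).
pose pB x := epsilon (inhabits (0 : int)) (fun k => Ak b k x).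
have pAP : forall x, orbital f a x -> Ak a (pA x) x.
  move=> x hx; apply: (epsilon_spec (inhabits (0 : int)) (fun k => Ak a k x)).
  exact: Ak_ex.
have pBP : forall x, orbital f b x -> Ak b (pB x) x.
  move=> x hx; apply: (epsilon_spec (inhabits (0 : int)) (fun k => Ak b k x)).
  exact: Ak_ex.
exists (fun x => ph (pA x) x); split.
  apply: (glue (R := fun i j => i < j) (q := pB) (p := pA) (phi := ph)).
  - move=> x y ax ay xy ne; rewrite lt_neqAle; apply/andP; split; first by apply/eqP.
    rewrite leNgt; apply/negP => h.
    have /andP[_ h1] := pAP y ay; have /andP[h2 _] := pAP x ax.
    have h3 : powz f (pA y + 1) a <= powz f (pA x) a by apply: powz_mono => //; lia.
    have : y < x := lt_le_trans h1 (le_trans h3 h2).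
    by rewrite ltNge (ltW xy).
  - move=> x y bx bY /= h.
    have /andP[_ h1] := pBP x bx; have /andP[h2 _] := pBP y bY.
    have : powz f (pB x + 1) b <= powz f (pB y) b by apply: powz_mono => //; lia.
    by move=> h3; apply: (lt_le_trans h1 (le_trans h3 h2)).
  - move=> k; apply: (iso_ext (isok k)) => //.
    + move=> x /=; split.
        by move=> hx; have ox := Ak_orb hx; split => //; apply: (Ak_uniq ha (pAP x ox)).
      by case=> ox <-; exact: pAP.
    + move=> x /=; split.
        by move=> hx; have ox := Ak_orb hx; split => //; apply: (Ak_uniq hb (pBP x ox)).
      by case=> ox <-; exact: pBP.
move=> x ox; have hk := pAP x ox.
have fk : Ak a (pA x + 1) (f x).
  move: hk; rewrite /Ak /= => /andP[h1 h2]; apply/andP; split.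
    by rewrite powzS // inG_le.
  by rewrite (powzS _ (pA x + 1)) // inG_lt.
have -> : pA (f x) = pA x + 1.
  apply: (Ak_uniq ha _ fk); apply: pAP; exact/orb_f_iff.
have e1 : powz f (- (pA x + 1)) (f x) = powz f (- pA x) x.
  rewrite -(powz1 f x) -powzD //.
  by have -> : - (pA x + 1) + 1 = - pA x by lia.
by rewrite /ph /= e1 powzS.
Qed.
End OrbConj.

Lemma finv_finv f z : inG f -> finv (finv f) z = f z.
Proof.
move=> hf; apply: (inG_inj (inG_finv hf)); rewrite finvK ?finvK' //; exact: inG_finv.
Qed.

Lemma powz_finv f m x : inG f -> powz (finv f) m x = powz f (- m) x.
Proof.
move=> hf; have hF := inG_finv hf.
elim/int_rect: m x => [|k IH|k IH] x; first by [].
  have -> : (k.+1 : int) = (k : int) + 1 by lia.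
  rewrite powzS // IH; have -> : - ((k : int) + 1) = - (k : int) - 1 by lia.
  by rewrite powzP.
have -> : - (k.+1 : int) = - (k : int) - 1 by lia.
rewrite powzP // IH finv_finv //; rewrite opprK.
have -> : - (- (k : int) - 1) = (k : int) + 1 by lia.
by rewrite powzS.
Qed.

Lemma orb_finv f a : inG f -> orbital (finv f) a = orbital f a.
Proof.
move=> hf; apply/seteqP; split=> x [m [n]]; rewrite ?powz_finv //.
  by move=> h; exists (- m), (- n).
move=> [h1 h2]; exists (- m), (- n); rewrite !powz_finv // !opprK; by split.
Qed.

Lemma orb_conj f a b : inG f -> support f a -> support f b -> (a < f a <-> b < f b) ->
  exists phi, iso (orbital f a) (orbital f b) phi /\
    forall x, orbital f a x -> phi (f x) = f (phi x).
Proof.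
move=> hf sa sb e.
case: (pselect (a < f a)) => ha.
  by apply: orb_conj_pos => //; exact/e.
have hb : ~ b < f b by move=> /e.
have ha' : f a < a by rewrite lt_neqAle; apply/andP; split; [apply/eqP | rewrite leNgt; exact/negP].
have hb' : f b < b by rewrite lt_neqAle; apply/andP; split; [apply/eqP | rewrite leNgt; exact/negP].
have hF := inG_finv hf.
have pa : a < finv f a by rewrite -(inG_lt hf) finvK.
have pb : b < finv f b by rewrite -(inG_lt hf) finvK.
have [phi [hi hc]] := orb_conj_pos hF pa pb.
rewrite !orb_finv // in hi hc.
exists phi; split => // x ox.
have ofx : orbital f a (f x) by exact/orb_f_iff.
have := hc _ ofx; rewrite finvK' // => ->.
by rewrite finvK.
Qed.

Definition Lo (O : set rat) : set rat := [set x | forall y, O y -> x < y].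
Definition Up (O : set rat) : set rat := [set x | forall y, O y -> y < x].

Inductive pc := PL | PO of nat | PG of nat | PU.

Definition inpc (T : nat -> set rat) (P : pc) (x : rat) : Prop :=
  match P with
  | PL => Lo (T 0%N) x
  | PO i => T i x
  | PG i => Up (T i) x /\ Lo (T i.+1) x
  | PU => forall i, Up (T i) x
  end.

Definition Rlt (P Q : pc) : Prop :=
  match P, Q with
  | PL, PL => False
  | PL, _ => True
  | PO i, PO j => (i < j)%N
  | PO i, PG j => (i <= j)%N
  | PO _, PU => True
  | PG i, PO j => (i < j)%N
  | PG i, PG j => (i < j)%N
  | PG _, PU => True
  | _, _ => False
  end.

Lemma Rlt_total P Q : P <> Q -> Rlt P Q \/ Rlt Q P.
Proof.
case: P => [|i|i|]; case: Q => [|j|j|] //= ne; try by [left | right].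
all: try (have nij : i <> j by move=> e; apply: ne; rewrite e).
all: lia.
Qed.

Section Pieces.
Variable T : nat -> set rat.
Hypothesis Tne : forall i, exists x, T i x.
Hypothesis Tconv : forall i, convex (T i).
Hypothesis Tbel : forall i j, (i < j)%N -> below (T i) (T j).

Lemma Lo_mono i j : (i <= j)%N -> Lo (T i) `<=` Lo (T j).
Proof.
rewrite leq_eqVlt => /orP[/eqP -> //|ij] x hx y hy.
have [z hz] := Tne i; exact: lt_trans (hx _ hz) (Tbel ij hz hy).
Qed.

Lemma Up_mono i j : (i <= j)%N -> Up (T j) `<=` Up (T i).
Proof.
rewrite leq_eqVlt => /orP[/eqP -> //|ij] x hx y hy.
have [z hz] := Tne j; exact: lt_trans (Tbel ij hy hz) (hx _ hz).
Qed.

Lemma LoUp i x y : Lo (T i) x -> Up (T i) y -> x < y.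
Proof. by move=> h1 h2; have [z hz] := Tne i; exact: lt_trans (h1 _ hz) (h2 _ hz). Qed.

Lemma pc_order P Q x y : inpc T P x -> inpc T Q y -> Rlt P Q -> x < y.
Proof.
case: P => [|i|i|]; case: Q => [|j|j|] //= hx hy hr.
- exact: (Lo_mono (leq0n j) hx hy).
- exact: (LoUp (Lo_mono (leq0n j) hx) hy.1).
- exact: (LoUp hx (hy 0%N)).
- exact: (Tbel hr hx hy).
- exact: (Up_mono hr hy.1 hx).
- exact: (hy i x hx).
- exact: (Lo_mono hr hx.2 hy).
- exact: (LoUp (Lo_mono hr hx.2) hy.1).
- exact: (LoUp hx.2 (hy i.+1)).
Qed.

Lemma pc_uniq P Q x : inpc T P x -> inpc T Q x -> P = Q.
Proof.
move=> h1 h2; apply: contrapT => ne.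
by case: (Rlt_total ne) => h; [have := pc_order h1 h2 h | have := pc_order h2 h1 h]; rewrite ltxx.
Qed.

Lemma pc_ex x : exists P, inpc T P x.
Proof.
case: (pselect (forall i, Up (T i) x)) => hU; first by exists PU.
have [i hi] : exists i, `[< ~ Up (T i) x >].
  apply: contrapT => h; apply: hU => i; apply: contrapT => h'; apply: h.
  by exists i; apply/asboolP.
have [k /asboolP hk mink] := @find_ex_minn (fun i => `[< ~ Up (T i) x >]) (ex_intro _ i hi).
case: (conv_trich (@Tconv k) x) => [hx|[hx|hx]].
- by exists (PO k).
- case: k hk mink hx => [|k] hk mink hx; first by exists PL.
  exists (PG k); split => //; apply: contrapT => h.
  by have := mink k (asboolT h); rewrite ltnn.
- by exfalso; apply: hk.
Qed.

Definition cls x := epsilon (inhabits PL) (fun P => inpc T P x).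
Lemma cls_spec x : inpc T (cls x) x.
Proof.
apply: (epsilon_spec (inhabits PL) (fun P => inpc T P x)); exact: pc_ex.
Qed.
Lemma cls_eq P x : inpc T P x -> cls x = P.
Proof. move=> h; exact: pc_uniq (cls_spec x) h. Qed.
End Pieces.

Definition restr (X : set rat) (f : rat -> rat) (x : rat) : rat :=
  if pselect (X x) then f x else x.

Lemma restr_in X f x : X x -> restr X f x = f x.
Proof. by rewrite /restr; case: pselect. Qed.
Lemma restr_out X f x : ~ X x -> restr X f x = x.
Proof. by rewrite /restr; case: pselect. Qed.

Lemma restr_G f X : inG f -> (forall x y, X x -> orbital f x y -> X y) -> inG (restr X f).
Proof.
move=> hf hX; split.
  move=> x y xy; rewrite /restr; case: pselect => hx; case: pselect => hy /=.
  - by rewrite inG_lt.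
  - rewrite ltNge; apply/negP => yfx; apply: hy; apply: (hX x) => //.
    apply: (orb_conv (orb_refl f x) _ (ltW xy) yfx).
    by rewrite -powz1; exact: orb_powz.
  - rewrite ltNge; apply/negP => fyx; apply: hx; apply: (hX y) => //.
    apply: (orb_conv _ (orb_refl f y) fyx (ltW xy)).
    by rewrite -powz1; exact: orb_powz.
  - exact: xy.
move=> y; case: (pselect (X y)) => hy.
  have h : X (finv f y) by apply: (hX y) => //; rewrite -powzN1; exact: orb_powz.
  by exists (finv f y); rewrite /restr; case: pselect => [? /=|//]; rewrite finvK.
by exists y; rewrite /restr; case: pselect.
Qed.

Lemma restr_restriction X f : restriction (restr X f) f.
Proof.
by split=> x; rewrite /support /restr /=; case: pselect.
Qed.

Lemma Lo_conv X : convex (Lo X).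
Proof. by move=> x y z hx hy h1 h2 u hu; exact: le_lt_trans h2 (hy _ hu). Qed.
Lemma Up_conv X : convex (Up X).
Proof. by move=> x y z hx hy h1 h2 u hu; exact: lt_le_trans (hx _ hu) h1. Qed.
Lemma gap_conv X Y : convex (fun x => Up X x /\ Lo Y x).
Proof.
move=> x y z [h1 h2] [h3 h4] a b; split; [exact: (Up_conv h1 h3 a b) | exact: (Lo_conv h2 h4 a b)].
Qed.

Lemma Lo_nomin X : ~ hasmin (Lo X).
Proof.
case=> m [hm mm]; have : Lo X (m - 1) by move=> y hy; have := hm _ hy; lra.
by move=> /mm; lra.
Qed.

Lemma gap_min X Y z : Up X z -> Lo Y z ->
  (hasmin (fun x => Up X x /\ Lo Y x) <-> hasmin (Up X)).
Proof.
move=> z1 z2; split.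
  case=> m [[m1 m2] mm]; exists m; split => // y hy.
  case: (pselect (Lo Y y)) => ly; first exact: mm.
  have [u [hu uy]] : exists u, Y u /\ u <= y.
    apply: contrapT => ne; apply: ly => u hu; rewrite ltNge; apply/negP => uy.
    by apply: ne; exists u.
  exact: ltW (lt_le_trans (m2 _ hu) uy).
case=> m [hm mm]; exists m; split.
  by split => // y hy; exact: le_lt_trans (mm _ z1) (z2 _ hy).
by move=> x [hx _]; exact: mm.
Qed.

Lemma gap_max X Y z : Up X z -> Lo Y z ->
  (hasmax (fun x => Up X x /\ Lo Y x) <-> hasmax (Lo Y)).
Proof.
move=> z1 z2; split.
  case=> m [[m1 m2] mm]; exists m; split => // y hy.
  case: (pselect (Up X y)) => ly; first exact: mm.
  have [u [hu uy]] : exists u, X u /\ y <= u.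
    apply: contrapT => ne; apply: ly => u hu; rewrite ltNge; apply/negP => uy.
    by apply: ne; exists u.
  exact: ltW (le_lt_trans uy (m1 _ hu)).
case=> m [hm mm]; exists m; split.
  by split => // y hy; exact: lt_le_trans (z1 _ hy) (mm _ z2).
by move=> x [_ hx]; exact: mm.
Qed.

Lemma two_sub (A B : set rat) : A `<=` B -> (exists x y, A x /\ A y /\ x < y) ->
  exists x y, B x /\ B y /\ x < y.
Proof. by move=> s [x [y [h1 [h2 h3]]]]; exists x, y; split; [exact: s | split; [exact: s|]]. Qed.

Lemma orb_two f a : inG f -> support f a -> exists x y, orbital f a x /\ orbital f a y /\ x < y.
Proof.
move=> hf sa; have h1 := orb_refl f a.
have h2 : orbital f a (f a) by rewrite -powz1; exact: orb_powz.
case: (ltgtP a (f a)) => h.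
- by exists a, (f a).
- by exists (f a), a.
- by exfalso; apply: sa.
Qed.

Section Main.
Variable f : rat -> rat.
Hypothesis hf : inG f.
Variable w : nat -> rat.
Hypothesis hw_supp : forall i, support f (w i).
Hypothesis hw_inc : forall i j, (i < j)%N -> below (orbital f (w i)) (orbital f (w j)).
Hypothesis hw_sign : forall i, (w i < f (w i)) <-> (w 0%N < f (w 0%N)).
Hypothesis hw_lo : forall i, hasmax (Lo (orbital f (w i))) <-> hasmax (Lo (orbital f (w 0%N))).
Hypothesis hw_hi : forall i, hasmin (Up (orbital f (w i))) <-> hasmin (Up (orbital f (w 0%N))).

Definition Ob i := orbital f (w i).
Definition Tq i := Ob (i.*2.+1).
Definition Sq i := Tq i.+1.

Lemma Ob_conv i : convex (Ob i).
Proof. move=> x y z hx hy h1 h2; exact: orb_conv hx hy h1 h2. Qed.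

Lemma Ob_mid i k j x : (i < k)%N -> (k < j)%N -> Ob k x -> Up (Ob i) x /\ Lo (Ob j) x.
Proof.
move=> ik kj hx; split => y hy; first exact: (hw_inc ik hy hx).
exact: (hw_inc kj hx hy).
Qed.

Lemma Tq_ne i : exists x, Tq i x.
Proof. by exists (w i.*2.+1); exact: orb_refl. Qed.
Lemma Tq_conv i : convex (Tq i).
Proof. exact: Ob_conv. Qed.
Lemma Tq_bel i j : (i < j)%N -> below (Tq i) (Tq j).
Proof. move=> ij; apply: hw_inc; rewrite ltnS; rewrite -!muln2 ltn_mul2r; exact: ij. Qed.

Lemma Sq_ne i : exists x, Sq i x.
Proof. exact: Tq_ne. Qed.
Lemma Sq_conv i : convex (Sq i).
Proof. exact: Tq_conv. Qed.
Lemma Sq_bel i j : (i < j)%N -> below (Sq i) (Sq j).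
Proof. by move=> ij; apply: Tq_bel. Qed.

Definition pspec (P : pc) (phi : rat -> rat) :=
  iso (inpc Sq P) (inpc Tq P) phi /\
  (forall i x, P = PO i -> Sq i x -> phi (f x) = f (phi x)).

Lemma pspec_ex P : exists phi, pspec P phi.
Proof.
case: P => [|i|i|].
- have [phi hphi] : exists phi, iso (Lo (Sq 0%N)) (Lo (Tq 0%N)) phi.
    apply: conv_iso; try exact: Lo_conv.
    + apply: (two_sub (A := Ob 0%N)); last exact: orb_two.
      by move=> x hx y hy; exact: (hw_inc (isT : (0 < 3)%N) hx hy).
    + apply: (two_sub (A := Ob 0%N)); last exact: orb_two.
      by move=> x hx y hy; exact: (hw_inc (isT : (0 < 1)%N) hx hy).
    + by split=> /Lo_nomin.
    + by rewrite /Sq /Tq /Ob /= (hw_lo 3) (hw_lo 1).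
  by exists phi; split => // i x.
- have [phi [h1 h2]] := orb_conj hf (@hw_supp (i.+1.*2.+1)) (@hw_supp (i.*2.+1))
      (iff_trans (hw_sign _) (iff_sym (hw_sign _))).
  exists phi; split => // j x [<-]; exact: h2.
- have [phi hphi] : exists phi, iso (inpc Sq (PG i)) (inpc Tq (PG i)) phi.
    have m1 : forall x, Ob (i.+1.*2.+2) x -> inpc Sq (PG i) x.
      move=> x hx; apply: (Ob_mid (i := i.+1.*2.+1) (j := i.+2.*2.+1) (k := i.+1.*2.+2)) => //; lia.
    have m2 : forall x, Ob (i.+1.*2) x -> inpc Tq (PG i) x.
      move=> x hx; apply: (Ob_mid (i := i.*2.+1) (j := i.+1.*2.+1) (k := i.+1.*2)) => //; lia.
    have [z1 hz1] : exists z, inpc Sq (PG i) z by exists (w i.+1.*2.+2); apply: m1; exact: orb_refl.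
    have [z2 hz2] : exists z, inpc Tq (PG i) z by exists (w i.+1.*2); apply: m2; exact: orb_refl.
    apply: conv_iso; try exact: gap_conv.
    + apply: (two_sub (A := Ob (i.+1.*2.+2))); [exact: m1 | exact: orb_two].
    + apply: (two_sub (A := Ob (i.+1.*2))); [exact: m2 | exact: orb_two].
    + rewrite /inpc (gap_min hz1.1 hz1.2) (gap_min hz2.1 hz2.2).
      by rewrite /Sq /Tq /Ob (hw_hi (i.+1.*2.+1)) (hw_hi (i.*2.+1)).
    + rewrite /inpc (gap_max hz1.1 hz1.2) (gap_max hz2.1 hz2.2).
      by rewrite /Sq /Tq /Ob (hw_lo (i.+2.*2.+1)) (hw_lo (i.+1.*2.+1)).
  by exists phi; split => // j x.
- exists id; split; last by [].
  split.
  + by move=> x y.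
  + move=> x hx k; rewrite /Sq in hx; exact: (Up_mono Tq_ne Tq_bel (leqnSn k) (hx k)).
  + by move=> y hy; exists y; split => // k; exact: hy k.+1.
Qed.
Definition ph (P : pc) : rat -> rat := epsilon (inhabits id) (pspec P).
Lemma ph_spec P : pspec P (ph P).
Proof. apply: (epsilon_spec (inhabits id) (pspec P)); exact: pspec_ex. Qed.
Definition hh x := ph (cls Sq x) x.

Lemma hh_G : inG hh.
Proof.
apply: iso_G; apply: (glue (R := Rlt) (p := cls Sq) (q := cls Tq) (phi := ph)).
- move=> x y _ _ xy ne; case: (Rlt_total ne) => // h; exfalso.
  have := pc_order Sq_ne Sq_bel (cls_spec Sq_conv y) (cls_spec Sq_conv x) h.
  by rewrite ltNge (ltW xy).
- by move=> u v _ _ h; exact: (pc_order Tq_ne Tq_bel (cls_spec Tq_conv u) (cls_spec Tq_conv v) h).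
- move=> P; apply: (iso_ext (ph_spec P).1) => //.
  + move=> x; split; first by move=> hx; split=> //; exact: (cls_eq Sq_ne Sq_conv Sq_bel hx).
    by case=> _ <-; exact: cls_spec Sq_conv x.
  + move=> x; split; first by move=> hx; split=> //; exact: (cls_eq Tq_ne Tq_conv Tq_bel hx).
    by case=> _ <-; exact: cls_spec Tq_conv x.
Qed.

Definition Sset := [set x | exists i, Tq i x].
Definition S2set := [set x | exists i, Sq i x].
Definition gM := restr Sset f.
Definition g1M := restr (Tq 0%N) f.
Definition g2M := restr S2set f.

Lemma Sset_closed x y : Sset x -> orbital f x y -> Sset y.
Proof. by case=> i hi hxy; exists i; move: hi; rewrite /Sq /Tq /Ob => hi; exact (orb_trans hf hi hxy). Qed.
Lemma S2set_closed x y : S2set x -> orbital f x y -> S2set y.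
Proof. by case=> i hi hxy; exists i; move: hi; rewrite /Sq /Tq /Ob => hi; exact (orb_trans hf hi hxy). Qed.
Lemma T0_closed x y : Tq 0%N x -> orbital f x y -> Tq 0%N y.
Proof. by move=> hi hxy; move: hi; rewrite /Tq /Ob => hi; exact (orb_trans hf hi hxy). Qed.

Lemma gM_G : inG gM. Proof. exact: restr_G hf Sset_closed. Qed.
Lemma g1M_G : inG g1M. Proof. exact: restr_G hf T0_closed. Qed.
Lemma g2M_G : inG g2M. Proof. exact: restr_G hf S2set_closed. Qed.

Lemma Tq_f i x : Tq i x -> Tq i (f x).
Proof. by move=> h; apply/orb_f_iff. Qed.

Lemma hh_conj x : gM (hh x) = hh (g2M x).
Proof.
have hP := cls_spec Sq_conv x.
have hin : inpc Tq (cls Sq x) (hh x).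
  by have [[_ h2 _] _] := ph_spec (cls Sq x); exact: h2.
case: (pselect (exists i, cls Sq x = PO i)) => [[i ei]|nP].
  have hx : Sq i x by move: hP; rewrite ei.
  have e2 : g2M x = f x by rewrite /g2M restr_in //; exists i.
  have efx : cls Sq (f x) = PO i.
    exact (cls_eq Sq_ne Sq_conv Sq_bel (P := PO i) (Tq_f hx)).
  have hTx : Tq i (hh x) by move: hin; rewrite ei.
  rewrite e2 /gM restr_in; last by exists i.
  rewrite /hh efx ei; have [_ hc] := ph_spec (PO i).
  by rewrite (hc i x erefl hx).
have nS : ~ S2set x.
  by case=> j hj; apply: nP; exists j; exact (cls_eq Sq_ne Sq_conv Sq_bel (P := PO j) hj).
have nT : ~ Sset (hh x).
  case=> j hj; apply: nP; exists j.
  exact: (pc_uniq Tq_ne Tq_bel hin (hj : inpc Tq (PO j) (hh x))).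
by rewrite /g2M /gM !restr_out.
Qed.

Lemma gM_dec x : gM x = g1M (g2M x).
Proof.
case: (pselect (S2set x)) => hS.
  have [j hj] := hS.
  rewrite /g2M restr_in //.
  have nT0 : ~ Tq 0%N (f x).
    by move=> h; have := Tq_bel (ltn0Sn j) h (Tq_f hj); rewrite ltxx.
  by rewrite /g1M restr_out // /gM restr_in //; exists j.+1.
rewrite /g2M restr_out //.
case: (pselect (Tq 0%N x)) => h0.
  by rewrite /g1M /gM !restr_in //; exists 0%N.
rewrite /g1M /gM !restr_out //.
case=> -[|j] hj //; apply: hS; by exists j.
Qed.

Lemma main_inc : exists g g1 g2 : rat -> rat,
  [/\ inG g, inG g1, inG g2, restriction g f &
   [/\ is_bump g1, orbital_of g1 g, g = (fun x => g1 (g2 x)) & conjugate_in_G g g2]].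
Proof.
have s1 : support g1M (w 1%N).
  rewrite /support /= /g1M restr_in; first exact: hw_supp.
  exact: orb_refl.
have bump : is_bump g1M.
  split; first exact: g1M_G.
  split; first by exists (w 1%N).
  exists (Tq 0%N); split.
    apply/(NO_char _ g1M_G); exists (w 1%N); split => //.
    by rewrite (restr_orb hf g1M_G (restr_restriction _ _) s1).
  move=> O' /(NO_char _ g1M_G) [a [sa ->]].
  have ha : Tq 0%N a.
    by apply: contrapT => h; apply: sa; rewrite /g1M restr_out.
  rewrite (restr_orb hf g1M_G (restr_restriction _ _) sa).
  by rewrite /Tq /Ob /= (orb_eq hf ha).
exists gM, g1M, g2M; split.
- exact: gM_G.
- exact: g1M_G.
- exact: g2M_G.
- exact: restr_restriction.
split => //.
- split => //; split.
    move=> x sx; have h0 : Tq 0%N x by apply: contrapT => h; apply: sx; rewrite /g1M restr_out.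
    rewrite /support /= /gM restr_in; last by exists 0%N.
    by move: sx; rewrite /support /= /g1M restr_in.
  move=> x sx; have h0 : Tq 0%N x by apply: contrapT => h; apply: sx; rewrite /g1M restr_out.
  by rewrite /g1M /gM !restr_in //; exists 0%N.
- by apply: funext => x; exact: gM_dec.
- exists hh; split; first exact: hh_G.
  by apply: funext => x; exact: hh_conj.
Qed.
End Main.

Lemma nat_mono (s : nat -> nat) : (forall i, (s i < s i.+1)%N) -> forall i j, (i < j)%N -> (s i < s j)%N.
Proof.
move=> hs i j; elim: j => [|j IH] //; rewrite ltnS leq_eqVlt => /orP[/eqP ->|h]; first exact: hs.
exact: ltn_trans (IH h) (hs j).
Qed.

Lemma chain (rel : nat -> nat -> Prop) (s : nat -> nat) :
  (forall a b c, rel a b -> rel b c -> rel a c) -> (forall i, rel (s i) (s i.+1)) ->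
  forall i j, (i < j)%N -> rel (s i) (s j).
Proof.
move=> tr hs i j; elim: j => [|j IH] //; rewrite ltnS leq_eqVlt => /orP[/eqP ->|h]; first exact: hs.
exact: tr (IH h) (hs j).
Qed.

Lemma subseq_P (P : nat -> Prop) : exists s : nat -> nat, (forall i, (s i < s i.+1)%N) /\
  ((forall i, P (s i)) \/ (forall i, ~ P (s i))).
Proof.
case: (pselect (forall N, exists n, (N <= n)%N /\ P n)) => hA.
  pose nxt n := epsilon (inhabits 0%N) (fun m => (n < m)%N /\ P m).
  have nxtP : forall n, (n < nxt n)%N /\ P (nxt n).
    move=> n; apply: (epsilon_spec (inhabits 0%N) (fun m => (n < m)%N /\ P m)).
    by have [m [h1 h2]] := hA n.+1; exists m.
  exists (fun i => iter i.+1 nxt 0%N); split; first by move=> i; rewrite [iter i.+2 _ _]/= ; exact: (nxtP _).1.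
  by left => i /=; exact: (nxtP _).2.
have [N hN] : exists N, forall n, (N <= n)%N -> ~ P n.
  apply: contrapT => h; apply: hA => N; apply: contrapT => h2; apply: h; exists N => n hn pn.
  by apply: h2; exists n.
exists (fun i => N + i)%N; split; first by move=> i; rewrite addnS.
by right => i; apply: hN; exact: leq_addr.
Qed.

Lemma ramsey (rel : nat -> nat -> Prop) :
  (forall n m, n <> m -> rel n m \/ rel m n) -> (forall a b c, rel a b -> rel b c -> rel a c) ->
  exists s : nat -> nat, (forall i, (s i < s i.+1)%N) /\
    ((forall i j, (i < j)%N -> rel (s i) (s j)) \/ (forall i j, (i < j)%N -> rel (s j) (s i))).
Proof.
move=> tot tr.
pose Tn n := exists N, forall m, (N <= m)%N -> ~ rel n m.
case: (pselect (forall N, exists n, (N <= n)%N /\ Tn n)) => hA.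
  pose nxt n := epsilon (inhabits 0%N) (fun m => (n < m)%N /\ Tn m /\ rel m n).
  have nxtP : forall n, Tn n -> (n < nxt n)%N /\ Tn (nxt n) /\ rel (nxt n) n.
    move=> n [N hN]; apply: (epsilon_spec (inhabits 0%N) (fun m => (n < m)%N /\ Tn m /\ rel m n)).
    have [m [hm tm]] := hA (maxn N n.+1).
    exists m; split; first by apply: leq_trans hm; exact: leq_maxr.
    split => //; case: (tot n m).
    - by move=> e; move: hm; rewrite -e geq_max ltnn andbF.
    - by move=> r; exfalso; apply: (hN m) => //; apply: leq_trans hm; exact: leq_maxl.
    - by [].
  have [n0 t0] : exists n, Tn n by have [n [_ h]] := hA 0%N; exists n.
  pose s i := iter i nxt n0.
  have sT : forall i, Tn (s i).
    by elim=> [|i IH]; [exact: t0 | exact: (nxtP _ IH).2.1].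
  exists s; split; first by move=> i; exact: (nxtP _ (sT i)).1.
  right; apply: (chain (rel := fun a b => rel b a)).
    by move=> a b c h1 h2; exact: tr h2 h1.
  by move=> i; exact: (nxtP _ (sT i)).2.2.
have [N hN] : exists N, forall n, (N <= n)%N -> ~ Tn n.
  apply: contrapT => h; apply: hA => N; apply: contrapT => h2; apply: h; exists N => n hn pn.
  by apply: h2; exists n.
pose nxt n := epsilon (inhabits 0%N) (fun m => (n < m)%N /\ rel n m).
have nxtP : forall n, (N <= n)%N -> (n < nxt n)%N /\ rel n (nxt n).
  move=> n hn; apply: (epsilon_spec (inhabits 0%N) (fun m => (n < m)%N /\ rel n m)).
  apply: contrapT => h; apply: (hN n hn); exists n.+1 => m hm r; apply: h; by exists m.
pose s i := iter i nxt N.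
have sN : forall i, (N <= s i)%N.
  elim=> [|i IH]; first exact: leqnn.
  have h := (nxtP _ IH).1; exact: leq_trans IH (ltnW h).
exists s; split; first by move=> i; exact: (nxtP _ (sN i)).1.
left; apply: chain => //; move=> i; exact: (nxtP _ (sN i)).2.
Qed.

Section Feat.
Variable f : rat -> rat.
Hypothesis hf : inG f.

Definition goodseq (t : nat -> rat) :=
  (forall i, support f (t i)) /\ (forall i j, (i < j)%N -> below (orbital f (t i)) (orbital f (t j))).

Lemma good_sub t s : goodseq t -> (forall i, (s i < s i.+1)%N) -> goodseq (fun i => t (s i)).
Proof.
move=> [h1 h2] hs; split => // i j ij; apply: h2; exact: nat_mono.
Qed.

Lemma feat1 (F : rat -> Prop) (Q : (nat -> rat) -> Prop) t :
  goodseq t -> (forall s, (forall i, (s i < s i.+1)%N) -> Q t -> Q (fun i => t (s i))) -> Q t ->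
  exists t', [/\ goodseq t', Q t' & forall i, F (t' i) <-> F (t' 0%N)].
Proof.
move=> gt hQ qt; have [s [hs hP]] := subseq_P (fun i => F (t i)).
exists (fun i => t (s i)); split.
- exact: good_sub.
- exact: hQ.
- move=> i; case: hP => h; split => H.
  all: first [exact: h | by case: (h _ H)].
Qed.

Lemma feat3 (F1 F2 F3 : rat -> Prop) t : goodseq t ->
  exists w, [/\ goodseq w, forall i, F1 (w i) <-> F1 (w 0%N),
    forall i, F2 (w i) <-> F2 (w 0%N) & forall i, F3 (w i) <-> F3 (w 0%N)].
Proof.
move=> gt.
have [t1 [g1 _ c1]] := feat1 F1 (Q := fun _ => True) gt (fun _ _ _ => I) I.
have [t2 [g2 c1' c2]] := feat1 F2 (Q := fun t => forall i, F1 (t i) <-> F1 (t 0%N)) g1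
  (fun s _ h i => iff_trans (h (s i)) (iff_sym (h (s 0%N)))) c1.
have [t3 [g3 [c1'' c2'] c3]] := feat1 F3
  (Q := fun t => (forall i, F1 (t i) <-> F1 (t 0%N)) /\ (forall i, F2 (t i) <-> F2 (t 0%N))) g2
  (fun s _ h => conj (fun i => iff_trans (h.1 (s i)) (iff_sym (h.1 (s 0%N))))
                     (fun i => iff_trans (h.2 (s i)) (iff_sym (h.2 (s 0%N))))) (conj c1' c2).
by exists t3; split.
Qed.
End Feat.

Definition negf (f : rat -> rat) : rat -> rat := fun x => - f (- x).

Lemma inG_neg f : inG f -> inG (negf f).
Proof.
move=> hf; split.
  by move=> x y xy; rewrite /negf ltrN2 inG_lt // ltrN2.
by move=> y; exists (- finv f (- y)); rewrite /negf opprK finvK // opprK.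
Qed.

Lemma negf_negf f : negf (negf f) = f.
Proof. by apply: funext => x; rewrite /negf !opprK. Qed.

Lemma finv_neg f x : inG f -> finv (negf f) x = negf (finv f) x.
Proof.
move=> hf; apply: (inG_inj (inG_neg hf)); rewrite finvK; last exact: inG_neg.
by rewrite /negf opprK finvK // opprK.
Qed.

Lemma powz_neg f m x : inG f -> powz (negf f) m x = - powz f m (- x).
Proof.
move=> hf; have hn := inG_neg hf.
elim/int_rect: m x => [|k IH|k IH] x; first by rewrite /= opprK.
  have -> : (k.+1 : int) = (k : int) + 1 by lia.
  by rewrite !powzS // IH /negf opprK.
have -> : - (k.+1 : int) = - (k : int) - 1 by lia.
by rewrite !powzP // IH finv_neg // /negf opprK.
Qed.

Lemma orb_neg f a x : inG f -> orbital (negf f) a x <-> orbital f (- a) (- x).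
Proof.
move=> hf; split.
  case=> m [n]; rewrite !powz_neg // => -[h1 h2].
  by exists n, m; split; lra.
case=> m [n [h1 h2]]; exists n, m; rewrite !powz_neg //; split; lra.
Qed.

Lemma supp_neg g x : support (negf g) x <-> support g (- x).
Proof.
rewrite /support /negf /=; split => ne e; apply: ne; lra.
Qed.

Lemma negS_negS (O : set rat) : negS (negS O) = O.
Proof. by apply/seteqP; split => x; rewrite /negS /= opprK. Qed.

Lemma NO_neg g O : inG g -> nontrivial_orbitals (negf g) O <-> nontrivial_orbitals g (negS O).
Proof.
move=> hg; have hn := inG_neg hg; split.
  move=> /(NO_char _ hn) [a [sa ->]]; apply/(NO_char _ hg).
  exists (- a); split; first exact/supp_neg.
  by apply/seteqP; split => x; rewrite /negS /= orb_neg // opprK.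
move=> /(NO_char _ hg) [b [sb e]]; apply/(NO_char _ hn).
exists (- b); split; first by apply/supp_neg; rewrite opprK.
rewrite -(negS_negS O) e; apply/seteqP; split => x; rewrite /negS /= orb_neg // opprK //.
Qed.

Lemma bump_neg g : is_bump g -> is_bump (negf g).
Proof.
case=> hg [[x0 hx0] [O1 [h1 h2]]]; split; first exact: inG_neg.
split; first by exists (- x0); apply/supp_neg; rewrite opprK.
exists (negS O1); split; first by apply/NO_neg => //; rewrite negS_negS.
by move=> O' /(NO_neg _ hg) /h2 <-; rewrite negS_negS.
Qed.

Lemma restr_neg g f : restriction g f -> restriction (negf g) (negf f).
Proof.
case=> h1 h2; split.
  by move=> x /supp_neg /h1 /supp_neg.
by move=> x /supp_neg /h2; rewrite /negf => ->.
Qed.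

Lemma orbital_of_neg g1 g : orbital_of g1 g -> orbital_of (negf g1) (negf g).
Proof.
case=> hb [h1 h2]; split; first exact: bump_neg.
split.
  by move=> x /supp_neg /h1 /supp_neg.
by move=> x /supp_neg /h2; rewrite /negf => ->.
Qed.

Definition decomp (f : rat -> rat) := exists g g1 g2 : rat -> rat,
  [/\ inG g, inG g1, inG g2, restriction g f &
   [/\ is_bump g1, orbital_of g1 g, g = (fun x => g1 (g2 x)) & conjugate_in_G g g2]].

Lemma decomp_neg f : decomp (negf f) -> decomp f.
Proof.
case=> g [g1 [g2 [hg hg1 hg2 hr [hb ho he [h [hh hc]]]]]].
exists (negf g), (negf g1), (negf g2); split.
- exact: inG_neg.
- exact: inG_neg.
- exact: inG_neg.
- by rewrite -(negf_negf f); exact: restr_neg.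
split.
- exact: bump_neg.
- exact: orbital_of_neg.
- by apply: funext => x; rewrite /negf he opprK.
- exists (negf h); split; first exact: inG_neg.
  apply: funext => x; have := congr1 (fun F => F (- x)) hc.
  by rewrite /negf /= !opprK => ->.
Qed.

Lemma part2_inc f t : inG f -> goodseq f t -> decomp f.
Proof.
move=> hf gt.
have [w [[ws wi] c1 c2 c3]] := feat3 (fun a => a < f a) (fun a => hasmax (Lo (orbital f a)))
  (fun a => hasmin (Up (orbital f a))) gt.
exact: (main_inc hf ws wi c1 c2 c3).
Qed.

Lemma part2 f : inG f -> ~ finite_set (nontrivial_orbitals f) -> decomp f.
Proof.
move=> hf /infiniteP /pcard_leP [F].
have FS : forall n, nontrivial_orbitals f (F n) by move=> n; exact: (@funS _ _ _ _ F n I).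
have Fi : forall n m, F n = F m -> n = m.
  by move=> n m e; exact: (@inj _ _ _ F n m (mem_set I) (mem_set I) e).
pose r n := epsilon (inhabits 0) (fun a => support f a /\ F n = orbital f a).
have rP : forall n, support f (r n) /\ F n = orbital f (r n).
  move=> n; apply: (epsilon_spec (inhabits 0) (fun a => support f a /\ F n = orbital f a)).
  exact/(NO_char _ hf).
pose rel n m := below (orbital f (r n)) (orbital f (r m)).
have tot : forall n m, n <> m -> rel n m \/ rel m n.
  move=> n m ne; apply: orb_total => // e; apply: ne; apply: Fi.
  by rewrite (rP n).2 (rP m).2.
have tr : forall a b c, rel a b -> rel b c -> rel a c.
  move=> a b c h1 h2 x y hx hy; apply: lt_trans (h1 _ _ hx (orb_refl _ _)) (h2 _ _ (orb_refl _ _) hy).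
have [s [hs [inc|dec]]] := ramsey tot tr.
  apply: (part2_inc (t := fun i => r (s i))) => //; split => //.
  by move=> i; exact: (rP _).1.
apply: decomp_neg; apply: (part2_inc (t := fun i => - r (s i))); first exact: inG_neg.
split.
  by move=> i; apply/supp_neg; rewrite opprK; exact: (rP _).1.
move=> i j ij x y hx hy; move: hx hy; rewrite !orb_neg // !opprK => hx hy.
by have := dec i j ij _ _ hy hx; rewrite ltrN2.
Qed.

Theorem corollary2p3 (f : rat -> rat) (hf : inG f) :
  ~ (exists g g1 g2 : rat -> rat,
        [/\ inG g, inG g1, inG g2, restriction g f &
         [/\ is_bump g1, orbital_of g1 g, g = (fun x => g1 (g2 x)) & conjugate_in_G g g2]])
  <-> finite_set (nontrivial_orbitals f).
Proof.
split.
  by move=> nex; apply: contrapT => infin; apply: nex; exact: part2.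
move=> fin [g [g1 [g2 [hg hg1 hg2 hr [hb ho he hc]]]]].
exact: (part1 hf hg hg1 hg2 hr hb ho he hc fin).
Qed.
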